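(* Let $L\ge1$ be an integer and $h(x)=\mathrm{sech}\big((2L+1)\,\mathrm{arcsech}(x)\big)$. For $\epsilon\ll1$ (i.e. as $\epsilon\to0^+$), the larger solution $x_2\in(0,1)$ of the equation $h(x)+\epsilon=x$ satisfies $$x_2=1-\frac{1}{4(L^2+L)}\epsilon+\mathcal{O}(\epsilon^2).$$ *)

(* Defs.v *)
From Stdlib Require Import Reals Lra Lia.
Open Scope R_scope.

Definition sech (y : R) : R := / cosh y.

Definition arcsech (x : R) : R := ln ((1 + sqrt (1 - x ^ 2)) / x).

Definition h (L : nat) (x : R) : R := sech ((2 * INR L + 1) * arcsech x).

(* Main.v *)
Require Import Defs.
From Stdlib Require Import Reals.
Open Scope R_scope.
From Stdlib Require Import Lra Lia Psatz.
From Coquelicot Require Import Coquelicot.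
Open Scope R_scope.

Lemma d_cosh x : is_derive cosh x (sinh x).
Proof. apply is_derive_Reals, derivable_pt_lim_cosh. Qed.
Lemma d_sinh x : is_derive sinh x (cosh x).
Proof. apply is_derive_Reals, derivable_pt_lim_sinh. Qed.

Lemma cosh_ge1 x : 1 <= cosh x.
Proof.
  unfold cosh. rewrite exp_Ropp. assert (H := exp_pos x).
  set (a := exp x) in *. assert (a * / a = 1) by (field; lra).
  assert (0 < / a) by (apply Rinv_0_lt_compat; lra).
  assert (0 <= (a-1)^2 * / a) by (apply Rmult_le_pos; [apply pow2_ge_0 | lra]).
  nra.
Qed.

Lemma cosh_pos x : 0 < cosh x.
Proof. generalize (cosh_ge1 x); lra. Qed.

Lemma d_sech a x : is_derive (fun t => / cosh (a * t)) x (- (a * sinh (a * x)) / cosh (a * x) ^ 2).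
Proof.
  apply (is_derive_inv (fun t => cosh (a * t))).
  2: generalize (cosh_pos (a*x)); lra.
  apply is_derive_Reals.
  replace (a * sinh (a * x)) with (sinh (a*x) * a) by ring.
  apply (derivable_pt_lim_comp (fun t => a * t) cosh x a (sinh (a*x))).
  - apply is_derive_Reals. auto_derive; auto; ring.
  - apply derivable_pt_lim_cosh.
Qed.

Lemma dmin f g df dg x : is_derive f x df -> is_derive g x dg ->
  is_derive (fun t => g t - f t) x (dg - df).
Proof.
  intros Hf Hg. apply is_derive_Reals. apply is_derive_Reals in Hf, Hg.
  apply (derivable_pt_lim_minus g f x dg df Hg Hf).
Qed.

Lemma cont_of f x df : is_derive f x df -> continuity_pt f x.
Proof.
  intro H. apply derivable_continuous_pt. exists df. apply is_derive_Reals; exact H.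
Qed.

Lemma cmp f g df dg u : 0 <= u -> (forall x, is_derive f x (df x)) ->
  (forall x, is_derive g x (dg x)) -> (forall x, 0 <= x <= u -> df x <= dg x) ->
  f 0 <= g 0 -> f u <= g u.
Proof.
  intros Hu Hf Hg Hd H0.
  destruct (MVT_gen (fun t => g t - f t) 0 u (fun t => dg t - df t)) as [c [Hc E]].
  - intros; apply dmin; auto.
  - intros; apply (cont_of _ _ (dg x - df x)); apply dmin; auto.
  - rewrite Rmin_left in Hc by lra. rewrite Rmax_right in Hc by lra.
    assert (0 <= (dg c - df c) * (u - 0)) by (apply Rmult_le_pos; [generalize (Hd c Hc)|]; lra).
    lra.
Qed.

Lemma cosh_le2 u : 0 <= u <= 1 -> cosh u <= 2.
Proof.
  intros H. unfold cosh. assert (exp u <= exp 1).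
  { destruct (Req_dec u 1). subst; lra. left; apply exp_increasing; lra. }
  assert (exp (- u) <= 1). { rewrite <- exp_0. destruct (Req_dec u 0). subst. rewrite Ropp_0; lra. left; apply exp_increasing; lra. }
  generalize exp_le_3; lra.
Qed.

Lemma sinh_ge u : 0 <= u -> u <= sinh u.
Proof.
  intros Hu. apply (cmp (fun x => x) sinh (fun _ => 1) cosh u Hu).
  - intro; auto_derive; auto.
  - apply d_sinh.
  - intros; apply cosh_ge1.
  - rewrite sinh_0; lra.
Qed.

Lemma sinh_le u : 0 <= u <= 1 -> sinh u <= 2 * u.
Proof.
  intros Hu. apply (cmp sinh (fun x => 2 * x) cosh (fun _ => 2) u); try lra.
  - apply d_sinh.
  - intro; auto_derive; auto; ring.
  - intros; apply cosh_le2; lra.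
  - rewrite sinh_0; lra.
Qed.

Lemma cosh_le_a u : 0 <= u <= 1 -> cosh u <= 1 + u ^ 2.
Proof.
  intros Hu. apply (cmp cosh (fun x => 1 + x ^ 2) sinh (fun x => 2 * x) u); try lra.
  - apply d_cosh.
  - intro; auto_derive; auto; ring.
  - intros; apply sinh_le; lra.
  - rewrite cosh_0; lra.
Qed.

Lemma sinh_le_b u : 0 <= u <= 1 -> sinh u <= u + u ^ 3 / 3.
Proof.
  intros Hu. apply (cmp sinh (fun x => x + x ^ 3 / 3) cosh (fun x => 1 + x ^ 2) u); try lra.
  - apply d_sinh.
  - intro; auto_derive; auto; field.
  - intros; apply cosh_le_a; lra.
  - rewrite sinh_0; lra.
Qed.

Lemma cosh_up u : 0 <= u <= 1 -> cosh u <= 1 + u ^ 2 / 2 + u ^ 4 / 12.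
Proof.
  intros Hu. apply (cmp cosh (fun x => 1 + x ^ 2 / 2 + x ^ 4 / 12) sinh (fun x => x + x ^ 3 / 3) u); try lra.
  - apply d_cosh.
  - intro; auto_derive; auto; field.
  - intros; apply sinh_le_b; lra.
  - rewrite cosh_0; lra.
Qed.

Lemma cosh_lo u : 0 <= u -> 1 + u ^ 2 / 2 <= cosh u.
Proof.
  intros Hu. apply (cmp (fun x => 1 + x ^ 2 / 2) cosh (fun x => x) sinh u); try lra.
  - intro; auto_derive; auto; field.
  - apply d_cosh.
  - intros; apply sinh_ge; lra.
  - rewrite cosh_0; lra.
Qed.

Lemma p_bound u : 0 <= u <= 1 -> Rabs ((1 - / cosh u) - u ^ 2 / 2) <= u ^ 4 / 2.
Proof.
  intros Hu. assert (H1 := cosh_up u Hu). assert (H2 := cosh_lo u (proj1 Hu)).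
  set (c := cosh u) in *.
  assert (Hc : 1 <= c) by (unfold c; apply cosh_ge1).
  replace ((1 - / c) - u ^ 2 / 2) with ((c - 1 - u ^ 2 * c / 2) / c) by (field; lra).
  assert (0 <= u ^ 2) by nra. assert (u^2 <= 1) by nra.
  apply Rabs_le. split.
  - apply Rmult_le_reg_r with c; [lra|]. 
    replace ((c - 1 - u ^ 2 * c / 2) / c * c) with (c - 1 - u ^ 2 * c / 2) by (field; lra).
    nra.
  - apply Rmult_le_reg_r with c; [lra|].
    replace ((c - 1 - u ^ 2 * c / 2) / c * c) with (c - 1 - u ^ 2 * c / 2) by (field; lra).
    nra.
Qed.


Lemma cs_id t : cosh t ^ 2 - sinh t ^ 2 = 1.
Proof. unfold cosh, sinh. rewrite exp_Ropp. assert (H := exp_pos t). field. lra. Qed.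

Lemma arcsech_sech t : 0 <= t -> arcsech (sech t) = t.
Proof.
  intro Ht. unfold arcsech, sech.
  assert (Hc := cosh_ge1 t). assert (Hs := sinh_ge t Ht).
  assert (E : 1 - (/ cosh t) ^ 2 = (sinh t / cosh t) ^ 2).
  { generalize (cs_id t); intro. field_simplify; try lra. 
    replace (cosh t ^ 2 - 1) with (sinh t ^ 2) by lra. field. lra. }
  rewrite E, sqrt_pow2.
  2: { apply Rmult_le_pos; [lra | left; apply Rinv_0_lt_compat; lra]. }
  replace ((1 + sinh t / cosh t) / / cosh t) with (cosh t + sinh t) by (field; lra).
  replace (cosh t + sinh t) with (exp t). apply ln_exp.
  unfold cosh, sinh. field.
Qed.

Lemma arcsech_pos y : 0 < y < 1 -> 0 < arcsech y /\ sech (arcsech y) = y.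
Proof.
  intro Hy. unfold arcsech, sech.
  assert (Hr0 := sqrt_pos (1 - y ^ 2)).
  assert (Hr2 : sqrt (1 - y ^ 2) * sqrt (1 - y ^ 2) = 1 - y ^ 2) by (apply sqrt_sqrt; nra).
  set (r := sqrt (1 - y ^ 2)) in *.
  assert (Hu : 1 < (1 + r) / y).
  { apply Rmult_lt_reg_r with y; [lra|]. replace ((1 + r) / y * y) with (1 + r) by (field; lra). lra. }
  split.
  - rewrite <- ln_1. apply ln_increasing; lra.
  - unfold cosh. rewrite exp_Ropp, exp_ln by lra.
    assert (0 < 1 + r) by lra.
    field_simplify_eq; try (split; lra). nra.
Qed.

Lemma alg N t p1 p2 : 3 <= N -> 0 <= t -> N ^ 2 * t <= 1 ->
  Rabs (p1 - t ^ 2 / 2) <= t ^ 4 / 2 ->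
  Rabs (p2 - N ^ 2 * t ^ 2 / 2) <= (N * t) ^ 4 / 2 ->
  (N ^ 2 - 1) * t ^ 2 / 4 <= p2 - p1 /\
  Rabs ((1 - p1) - (1 - (p2 - p1) / (N ^ 2 - 1))) <= 16 * N ^ 4 / (N ^ 2 - 1) ^ 2 * (p2 - p1) ^ 2.
Proof.
  intros HN Ht HNt H1 H2.
  apply Rabs_le_between in H1. apply Rabs_le_between in H2.
  set (K := N ^ 2 - 1).
  assert (HK : 8 <= K) by (unfold K; nra).
  set (E1 := p1 - t ^ 2 / 2) in *. set (E2 := p2 - N ^ 2 * t ^ 2 / 2) in *.
  assert (Ht2 : 0 <= t ^ 2) by nra.
  assert (HN4 : N ^ 4 * t ^ 2 <= 1).
  { replace (N ^ 4 * t ^ 2) with ((N ^ 2 * t) ^ 2) by ring. 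
    assert (0 <= N ^ 2 * t) by nra. nra. }
  assert (Ht4 : N ^ 4 * t ^ 4 <= t ^ 2).
  { replace (N ^ 4 * t ^ 4) with ((N ^ 4 * t ^ 2) * t ^ 2) by ring. nra. }
  assert (Hq : 0 <= t ^ 4) by nra.
  assert (HN2 : 9 <= N ^ 2) by nra.
  assert (HN4' : 81 <= N ^ 4) by (replace (N ^ 4) with (N ^ 2 * N ^ 2) by ring; nra).
  assert (Hs : t ^ 4 <= t ^ 2 / 81) by nra.
  assert (Heq : p2 - p1 = K * t ^ 2 / 2 + E2 - E1) by (unfold K, E1, E2; field).
  replace ((N * t) ^ 4) with (N ^ 4 * t ^ 4) in H2 by ring.
  assert (Hlow : K * t ^ 2 / 4 <= p2 - p1) by nra.
  split; [exact Hlow|].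
  set (eps := p2 - p1) in *.
  replace ((1 - p1) - (1 - eps / K)) with ((E2 - E1 - K * E1) / K) by (rewrite Heq; unfold E1, E2, K in *; field; lra).
  assert (Hnum : Rabs (E2 - E1 - K * E1) <= N ^ 4 * t ^ 4 * K).
  { apply Rabs_le. unfold K in *. split; nra. }
  assert (Hteps : t ^ 2 <= 4 * eps / K).
  { apply Rmult_le_reg_r with K; [lra|]. replace (4 * eps / K * K) with (4 * eps) by (field; lra). lra. }
  assert (Ht4e : t ^ 4 <= (4 * eps / K) ^ 2).
  { replace (t ^ 4) with ((t ^ 2) ^ 2) by ring. apply pow_incr. lra. }
  unfold Rdiv at 1. rewrite Rabs_mult, Rabs_inv, (Rabs_right K) by lra.
  apply Rle_trans with (N ^ 4 * t ^ 4).
  - apply Rmult_le_reg_r with K; [lra|].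
    replace (Rabs (E2 - E1 - K * E1) * / K * K) with (Rabs (E2 - E1 - K * E1)) by (field; lra). lra.
  - replace (16 * N ^ 4 / K ^ 2 * eps ^ 2) with (N ^ 4 * (4 * eps / K) ^ 2) by (field; lra).
    apply Rmult_le_compat_l; nra.
Qed.

Lemma dF_pos N t : 3 <= N -> 0 < t -> N * t <= 1 ->
  0 < (- (1 * sinh (1 * t)) / cosh (1 * t) ^ 2) - (- (N * sinh (N * t)) / cosh (N * t) ^ 2).
Proof.
  intros HN Ht HNt. rewrite !Rmult_1_l.
  assert (Ht1 : t <= 1) by nra.
  assert (Hs1 := sinh_le t ltac:(lra)). assert (Hc1 := cosh_ge1 t).
  assert (Hs2 := sinh_ge (N * t) ltac:(nra)). assert (Hc2 := cosh_ge1 (N * t)).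
  assert (Hc2' := cosh_le2 (N * t) ltac:(nra)).
  set (s1 := sinh t) in *. set (c1 := cosh t) in *. set (s2 := sinh (N * t)) in *. set (c2 := cosh (N * t)) in *.
  assert (A : s1 / c1 ^ 2 <= 2 * t).
  { apply Rmult_le_reg_r with (c1 ^ 2); [nra|].
    replace (s1 / c1 ^ 2 * c1 ^ 2) with s1 by (field; lra).
    assert (1 <= c1 ^ 2) by nra. assert (2 * t <= 2 * t * c1 ^ 2) by nra. lra. }
  assert (B : N * N * t / 4 <= N * s2 / c2 ^ 2).
  { apply Rmult_le_reg_r with (c2 ^ 2); [nra|].
    replace (N * s2 / c2 ^ 2 * c2 ^ 2) with (N * s2) by (field; lra).
    assert (c2 ^ 2 <= 4) by nra. assert (0 <= N * N * t / 4) by nra.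
    apply Rle_trans with (N * N * t / 4 * 4). apply Rmult_le_compat_l; assumption.
    assert (N * (N * t) <= N * s2) by (apply Rmult_le_compat_l; lra).
    replace (N * N * t / 4 * 4) with (N * (N * t)) by field. lra. }
  assert (9 <= N * N) by nra. assert (0 <= (N * N - 9) * t) by (apply Rmult_le_pos; lra).
  assert (9 * t / 4 <= N * N * t / 4).
  { apply Rmult_le_compat_r. lra. replace (N * N * t) with (9 * t + (N * N - 9) * t) by ring. lra. }
  replace (- s1 / c1 ^ 2 - - (N * s2) / c2 ^ 2) with (N * s2 / c2 ^ 2 - s1 / c1 ^ 2) by (field; split; lra).
  lra.
Qed.

Theorem proposition4 (L : nat) (HL : (1 <= L)%nat) :
  exists eps0 C : R, 0 < eps0 /\
    forall eps : R, 0 < eps < eps0 ->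
      exists x2 : R,
        0 < x2 < 1 /\ h L x2 + eps = x2 /\
        (forall y : R, 0 < y < 1 -> h L y + eps = y -> y <= x2) /\
        Rabs (x2 - (1 - eps / (4 * (INR L ^ 2 + INR L)))) <= C * eps ^ 2.
Proof.
  assert (HL1 : 1 <= INR L) by (apply (le_INR 1); exact HL).
  assert (HK : 4 * (INR L ^ 2 + INR L) = (2 * INR L + 1) ^ 2 - 1) by (unfold Rdiv; ring).
  rewrite HK. unfold h.
  set (N := 2 * INR L + 1).
  assert (HN : 3 <= N) by (unfold N; lra).
  set (F := fun t => / cosh (1 * t) - / cosh (N * t)).
  set (dF := fun t => (- (1 * sinh (1 * t)) / cosh (1 * t) ^ 2) - (- (N * sinh (N * t)) / cosh (N * t) ^ 2)).
  assert (HdF : forall x, is_derive F x (dF x)).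
  { intro x. unfold F, dF. apply (dmin (fun t => / cosh (N * t)) (fun t => / cosh (1 * t))); apply d_sech. }
  assert (HF : forall t, F t = sech t - sech (N * t)).
  { intro t. unfold F, sech. rewrite Rmult_1_l. reflexivity. }
  set (tau := 1 / N ^ 2).
  assert (Htau : 0 < tau) by (unfold tau; apply Rdiv_lt_0_compat; nra).
  assert (HNtau : N ^ 2 * tau = 1) by (unfold tau; field; lra).
  assert (KEY : forall t, 0 <= t <= tau ->
     (N ^ 2 - 1) * t ^ 2 / 4 <= F t /\
     Rabs ((/ cosh t) - (1 - F t / (N ^ 2 - 1))) <= 16 * N ^ 4 / (N ^ 2 - 1) ^ 2 * (F t) ^ 2).
  { intros t Ht.
    assert (HNt : N ^ 2 * t <= 1) by nra.
    assert (P1 := p_bound t ltac:(nra)).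
    assert (P2 := p_bound (N * t) ltac:(nra)).
    replace ((N * t) ^ 2 / 2) with (N ^ 2 * t ^ 2 / 2) in P2 by (unfold Rdiv; ring).
    destruct (alg N t _ _ HN (proj1 Ht) HNt P1 P2) as [A B].
    replace ((1 - / cosh (N * t)) - (1 - / cosh t)) with (F t) in A, B by (unfold F; rewrite Rmult_1_l; ring).
    replace (1 - (1 - / cosh t)) with (/ cosh t) in B by ring.
    split; assumption. }
  exists ((N ^ 2 - 1) * tau ^ 2 / 4), (16 * N ^ 4 / (N ^ 2 - 1) ^ 2).
  split.
  { apply Rdiv_lt_0_compat; [|lra]. apply Rmult_lt_0_compat; nra. }
  intros eps Heps.
  assert (Hcont : continuity F).
  { intro x. apply (cont_of _ _ (dF x)). apply HdF. }
  assert (HF0 : F 0 = 0).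
  { unfold F. rewrite !Rmult_0_r, cosh_0. field. }
  destruct (KEY tau ltac:(lra)) as [Ftau _].
  destruct (IVT_gen F 0 tau eps Hcont) as [t2 [Ht2 Ft2]].
  { rewrite HF0, Rmin_left, Rmax_right; lra. }
  rewrite Rmin_left, Rmax_right in Ht2 by lra.
  assert (Ht2' : 0 < t2 < tau).
  { split; destruct Ht2 as [[?|?] [?|?]]; subst; try lra; rewrite ?HF0 in Ft2; lra. }
  assert (Hincr : forall a b, 0 < a -> a < b -> b < tau -> F a < F b).
  { intros a b Ha Hab Hb. apply (incr_function F (Finite 0) (Finite tau) dF); simpl; auto; try lra.
    intros x Hx0 Hx1. apply dF_pos; nra. }
  exists (/ cosh t2).
  assert (Hc2 := cosh_lo t2 ltac:(lra)).
  assert (Hc2p : 0 < cosh t2) by apply cosh_pos.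
  split.
  { split. apply Rinv_0_lt_compat; lra.
    assert (/ cosh t2 * cosh t2 = 1) by (field; lra).
    assert (0 < t2 ^ 2) by nra. nra. }
  split.
  { change (/ cosh t2) with (sech t2). rewrite arcsech_sech by lra.
    rewrite HF in Ft2. fold N. lra. }
  split.
  { intros y Hy Hyeq.
    destruct (arcsech_pos y Hy) as [Hs Hsy].
    set (s := arcsech y) in *. fold N in Hyeq.
    assert (Fs : F s = eps) by (rewrite HF; lra).
    destruct (Rlt_or_le s t2) as [Hlt | Hle].
    - exfalso. assert (F s < F t2) by (apply Hincr; lra). lra.
    - rewrite <- Hsy. unfold sech. apply Rinv_le_contravar; [lra|].
      destruct Hle as [Hlt | Heq]; [|rewrite Heq; lra].
      left. apply (incr_function cosh (Finite 0) p_infty sinh); simpl; auto; try lra.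
      + intros; apply d_cosh.
      + intros x Hx _. generalize (sinh_ge x ltac:(lra)); lra. }
  destruct (KEY t2 ltac:(lra)) as [_ B]. rewrite Ft2 in B. exact B.
Qed.
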